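(* Assume the standing setting below and let $\{(x_k,\lambda_k)\}_{k\ge0}$ and directions $p_k$ ($k\ge1$) be generated by the Projected Newton iteration, where for each $k\ge1$ the step-length $\gamma_k\in(0,1]$ satisfies $\lambda_k>0$, the sufficient decrease condition $$\tfrac12\|F(x_k,\lambda_k)\|^2\le\left(\tfrac12-c\gamma_k\right)\|F(x_{k-1},\lambda_{k-1})\|^2$$ for a fixed $c\in(0,1)$, and the lower bound $$\gamma_k\ge\min\left(1,\ \frac{2(1-c)\tau\|F(x_{k-1},\lambda_{k-1})\|^2}{\zeta\|p_k\|^2}\right)$$ for fixed constants $\tau\in(0,1)$ and $\zeta>0$ (whenever $F(x_{k-1},\lambda_{k-1})\ne0$). Then either $\|F(x_k,\lambda_k)\|=0$ for some $k\ge0$, or $$\lim_{k\to\infty}\min\left(\|F(x_k,\lambda_k)\|,\ \frac{\|F(x_k,\lambda_k)\|^2}{\|p_{k+1}\|}\right)=0.$$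
   Context: Standing setting. $A\in\mathbb{R}^{m\times n}$ ($m\ge n$), $b\in\mathbb{R}^m$ with $\|b\|\ge\sigma>0$. $F(x,\lambda)=\begin{pmatrix}\lambda A^T(Ax-b)+x\\ \tfrac12\|Ax-b\|^2-\tfrac{\sigma^2}{2}\end{pmatrix}$. Golub–Kahan bidiagonalization (Bidiag1): $u_0=b/\|b\|$, $\nu_0v_{-1}=0$, for $j=0,1,\dots$: $r_j=A^Tu_j-\nu_jv_{j-1}$, $\mu_j=\|r_j\|$, $v_j=r_j/\mu_j$, $p_j=Av_j-\mu_ju_j$, $\nu_{j+1}=\|p_j\|$, $u_{j+1}=p_j/\nu_{j+1}$; no breakdown (all $\mu_j,\nu_j>0$) and exact orthonormality of $\{v_j\}$ and $\{u_j\}$ are assumed. $V_k=[v_0,\dots,v_{k-1}]$; $B_{k+1,k}\in\mathbb{R}^{(k+1)\times k}$ lower bidiagonal with diagonal $\mu_0,\dots,\mu_{k-1}$, subdiagonal $\nu_1,\dots,\nu_k$; $c_{k+1}=(\|b\|,0,\dots,0)^T\in\mathbb{R}^{k+1}$. $F^{(k)}(y,\lambda)=\begin{pmatrix}\lambda B_{k+1,k}^T(B_{k+1,k}y-c_{k+1})+y\\ \tfrac12\|B_{k+1,k}y-c_{k+1}\|^2-\tfrac{\sigma^2}{2}\end{pmatrix}$, $J^{(k)}$ its Jacobian in $(y,\lambda)$. Projected Newton iteration: $\lambda_0>0$, $x_0=0$, $\bar y_0=0\in\mathbb{R}^1$. For $k\ge1$: $(\Delta y_k,\Delta\lambda_k)=-J^{(k)}(\bar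 y_{k-1},\lambda_{k-1})^{-1}F^{(k)}(\bar y_{k-1},\lambda_{k-1})$, $p_k=(V_k\Delta y_k,\Delta\lambda_k)\in\mathbb{R}^{n+1}$, $y_k=\bar y_{k-1}+\gamma_k\Delta y_k$, $\lambda_k=\lambda_{k-1}+\gamma_k\Delta\lambda_k$, $\bar y_k=(y_k^T,0)^T$, $x_k=V_ky_k$. *)

(* Defs.v *)
From HB Require Import structures.
From mathcomp Require Import all_boot all_order all_algebra.
Set Implicit Arguments. Unset Strict Implicit. Unset Printing Implicit Defensive.
Import Order.TTheory GRing.Theory Num.Theory.
Local Open Scope ring_scope.

Section PN.
Variable R : archiRcfType.

Definition vnorm k (v : 'cV[R]_k) : R := Num.sqrt (\sum_i v i 0 ^+ 2).

(* (y, a) in R^(k+1) with last coordinate a; and the corresponding projections *)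
Definition ext k (y : 'cV[R]_k) (a : R) : 'cV[R]_k.+1 :=
  \col_i (if unlift ord_max i is Some j then y j 0 else a).
Definition top k (v : 'cV[R]_k.+1) : 'cV[R]_k := \col_j v (lift ord_max j) 0.
Definition lst k (v : 'cV[R]_k.+1) : R := v ord_max 0.

Variables (m n : nat) (A : 'M[R]_(m, n)) (b : 'cV[R]_m) (sigma : R).

Definition Ffun (x : 'cV[R]_n) (lam : R) : 'cV[R]_n.+1 :=
  ext (lam *: (A^T *m (A *m x - b)) + x)
      (2^-1 * vnorm (A *m x - b) ^+ 2 - sigma ^+ 2 / 2).

(* Golub-Kahan bidiagonalization (Bidiag1).  gk j = (u_j, v_{j-1}, nu_j),
   with v_{-1} = 0 and nu_0 = 0. *)
Fixpoint gk (j : nat) : 'cV[R]_m * 'cV[R]_n * R :=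
  match j with
  | 0 => ((vnorm b)^-1 *: b, 0, 0)
  | j'.+1 =>
      let: (u, vprev, nu) := gk j' in
      let r := A^T *m u - nu *: vprev in
      let mu := vnorm r in
      let v := mu^-1 *: r in
      let p := A *m v - mu *: u in
      let nu' := vnorm p in
      (nu'^-1 *: p, v, nu')
  end.

Definition gk_u j := (gk j).1.1.
Definition gk_nu j := (gk j).2.
Definition gk_v j := (gk j.+1).1.2.
Definition gk_mu j := vnorm (A^T *m gk_u j - gk_nu j *: (gk j).1.2).

Definition Vmat k : 'M[R]_(n, k) := \matrix_(i, l) gk_v l i 0.
Definition Bmat k : 'M[R]_(k.+1, k) :=
  \matrix_(i, l) (if val i == val l then gk_mu l
                  else if val i == (val l).+1 then gk_nu i else 0).
Definition cvec k : 'cV[R]_k.+1 := \col_i (if val i == 0%N then vnorm b else 0).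

Definition Fk k (y : 'cV[R]_k) (lam : R) : 'cV[R]_k.+1 :=
  ext (lam *: ((Bmat k)^T *m (Bmat k *m y - cvec k)) + y)
      (2^-1 * vnorm (Bmat k *m y - cvec k) ^+ 2 - sigma ^+ 2 / 2).

(* J^{(k)}(y, lambda): the Jacobian of F^{(k)} in (y, lambda), written out *)
Definition Jk k (y : 'cV[R]_k) (lam : R) : 'M[R]_k.+1 :=
  let g := (Bmat k)^T *m (Bmat k *m y - cvec k) in
  \matrix_(i, j)
    match unlift ord_max i, unlift ord_max j with
    | Some i', Some j' => (lam *: ((Bmat k)^T *m Bmat k) + 1%:M) i' j'
    | Some i', None => g i' 0
    | None, Some j' => g j' 0
    | None, None => 0
    end.

Definition newton_dir k (y : 'cV[R]_k) (lam : R) : 'cV[R]_k.+1 :=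
  - (invmx (Jk y lam) *m Fk y lam).

Variables (lam0 : R) (gamma : nat -> R).

(* pn k = (ybar_k, lambda_k), ybar_k in R^(k+1) *)
Fixpoint pn (k : nat) : 'cV[R]_k.+1 * R :=
  match k return 'cV[R]_k.+1 * R with
  | 0 => (0, lam0)
  | k'.+1 =>
      let: (yb, l) := pn k' in
      let d := newton_dir yb l in
      let y := yb + gamma k'.+1 *: top d in
      (ext y 0, l + gamma k'.+1 * lst d)
  end.

Definition lam_it k := (pn k).2.
Definition ybar_it k := (pn k).1.
(* x_k = V_k y_k  (for k = 0 this is 0) *)
Definition x_it k : 'cV[R]_n := Vmat k *m top (ybar_it k).
(* J^{(k+1)} at (ybar_k, lambda_k), the matrix inverted at step k+1 *)
Definition J_it k := Jk (ybar_it k) (lam_it k).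
(* p_{k+1} = (V_{k+1} Delta y_{k+1}, Delta lambda_{k+1}) *)
Definition p_it k : 'cV[R]_n.+1 :=
  let d := newton_dir (ybar_it k) (lam_it k) in
  ext (Vmat k.+1 *m top d) (lst d).
Definition F_it k := Ffun (x_it k) (lam_it k).

End PN.

(* Main.v *)
Require Import Defs.
From HB Require Import structures.
From mathcomp Require Import all_boot all_order all_algebra.
From mathcomp Require Import ring lra.
From Stdlib Require Import Classical.
Set Implicit Arguments. Unset Strict Implicit. Unset Printing Implicit Defensive.
Import Order.TTheory GRing.Theory Num.Theory.
Local Open Scope ring_scope.

Lemma eventually_small (R : archiRcfType) (c d : R) (g f : nat -> R) :
  0 < c -> 0 < d -> (forall k, 0 <= f k) -> (forall k, 0 < g k.+1) ->
  (forall k, f k.+1 <= f k - 2 * c * g k.+1 * f k) ->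
  exists N, forall k, (N <= k)%N -> g k.+1 * f k < d.
Proof.
move=> c0 d0 f0 g0 dec.
have mono : forall N e, f (N + e)%N <= f N.
  move=> N; elim=> [|e IH]; first by rewrite addn0.
  rewrite addnS; apply: le_trans (dec _) _.
  have := f0 (N + e)%N; have := g0 (N + e)%N.
  move=> h1 h2; apply: le_trans IH.
  rewrite lerBlDr lerDl; rewrite !mulr_ge0 // ?ltW //; lra.
apply: NNPP => Hn.
have Hinf : forall N, exists k, (N <= k)%N /\ d <= g k.+1 * f k.
  move=> N; apply: NNPP => H2; apply: Hn; exists N => k Nk.
  rewrite ltNge; apply/negP => h; apply: H2; by exists k.
have big : forall j : nat, exists N, j%:R * (2 * c * d) <= f 0%N - f N.
  elim=> [|j [N HN]]; first by exists 0%N; rewrite mul0r subrr.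
  have [k [Nk dk]] := Hinf N.
  exists k.+1.
  have := mono N (k - N)%N; rewrite subnKC // => fk.
  have := dec k. rewrite mulrSr mulrDl mul1r.
  have : 2 * c * d <= 2 * c * (g k.+1 * f k) by rewrite ler_pM2l //; lra.
  rewrite !mulrA => h1 h2. lra.
have fb : 0 <= f 0%N / (2 * c * d) by rewrite divr_ge0 // ?f0 // ltW // !mulr_gt0.
have := archi_boundP fb.
set j := Num.Def.archi_bound _ => hj.
have [N HN] := big j.
have := f0 N.
rewrite ltr_pdivrMr in hj; last by rewrite !mulr_gt0.
lra.
Qed.

Lemma minl (R : archiRcfType) (x y : R) : Num.min x y <= x.
Proof. by rewrite ge_min lexx. Qed.
Lemma minr (R : archiRcfType) (x y : R) : Num.min x y <= y.
Proof. by rewrite ge_min lexx orbT. Qed.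

Lemma pointwise (R : archiRcfType) (K eps gk s q : R) :
  0 < K -> 0 < eps -> 0 <= s -> 0 <= q ->
  Num.min 1 (K * s ^+ 2 / q ^+ 2) <= gk ->
  gk * s ^+ 2 < eps ^+ 2 * Num.min 1 K ->
  `|Num.min s (s ^+ 2 / q)| < eps.
Proof.
move=> K0 e0 s0 q0 hm hd.
have mge : 0 <= Num.min s (s ^+ 2 / q).
  by rewrite le_min s0 divr_ge0 // sqr_ge0.
rewrite ger0_norm //.
have [q00|qn0] := eqVneq q 0.
  by rewrite q00 invr0 mulr0 (le_lt_trans (minr _ _)).
have qp : 0 < q by rewrite lt_def qn0.
have mK1 : Num.min 1 K <= 1 := minl _ _.
have mKK : Num.min 1 K <= K := minr _ _.
have mK0 : 0 < Num.min 1 K by rewrite lt_min ltr01.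
move: hm; rewrite ge_min => /orP[h1|h2].
  apply: le_lt_trans (minl _ _) _.
  have : s ^+ 2 < eps ^+ 2.
    apply: le_lt_trans (_ : s ^+ 2 <= gk * s ^+ 2) _.
      by rewrite ler_peMl // sqr_ge0.
    apply: lt_le_trans hd _; rewrite ler_piMr // sqr_ge0 //.
  move=> h; nra.
apply: le_lt_trans (minr _ _) _.
set t := s ^+ 2 / q.
have ht : s ^+ 2 = t * q by rewrite /t mulrVK // unitfE.
have : K * t ^+ 2 < eps ^+ 2 * K.
  have e1 : K * t ^+ 2 = K * s ^+ 2 / q ^+ 2 * s ^+ 2.
    rewrite ht; field; by rewrite qn0.
  rewrite e1; apply: le_lt_trans (_ : _ <= gk * s ^+ 2) _.
    by rewrite ler_wpM2r // sqr_ge0.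
  apply: lt_le_trans hd _; rewrite ler_wpM2l // sqr_ge0 //.
have t0 : 0 <= t by rewrite /t divr_ge0 // sqr_ge0.
move=> h; rewrite ltNge; apply/negP => he.
have h3 : eps ^+ 2 <= t ^+ 2 by rewrite ler_pXn2r // ?nnegrE ltW.
have : K * eps ^+ 2 <= K * t ^+ 2 by rewrite ler_wpM2l // ltW.
rewrite mulrC in h; lra.
Qed.

Theorem theorem4p2 (R : archiRcfType) (m n : nat) (A : 'M[R]_(m, n))
  (b : 'cV[R]_m) (sigma lam0 c tau zeta : R) (gamma : nat -> R) :
  (n <= m)%N -> 0 < sigma -> sigma <= vnorm b ->
  0 < lam0 -> 0 < c < 1 -> 0 < tau < 1 -> 0 < zeta ->
  (forall k : nat,
     (forall j : nat, (j <= k)%N -> F_it A b sigma lam0 gamma j != 0) ->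
     [/\ J_it A b sigma lam0 gamma k \in unitmx,
         0 < gamma k.+1 <= 1,
         0 < lam_it A b sigma lam0 gamma k.+1,
         2^-1 * vnorm (F_it A b sigma lam0 gamma k.+1) ^+ 2
           <= (2^-1 - c * gamma k.+1) * vnorm (F_it A b sigma lam0 gamma k) ^+ 2
       & Num.min 1 (2 * (1 - c) * tau * vnorm (F_it A b sigma lam0 gamma k) ^+ 2
                      / (zeta * vnorm (p_it A b sigma lam0 gamma k) ^+ 2))
           <= gamma k.+1]) ->
  (exists k : nat, vnorm (F_it A b sigma lam0 gamma k) = 0) \/
  (forall eps : R, 0 < eps -> exists N : nat, forall k : nat, (N <= k)%N ->
     `| Num.min (vnorm (F_it A b sigma lam0 gamma k))
               (vnorm (F_it A b sigma lam0 gamma k) ^+ 2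
                  / vnorm (p_it A b sigma lam0 gamma k)) | < eps).
Proof.
move=> _ _ _ _ /andP[c0 c1] /andP[t0 t1] z0 H.
set F := F_it A b sigma lam0 gamma in H *.
set p := p_it A b sigma lam0 gamma in H *.
case: (classic (exists k, F k = 0)) => [[k Fk]|nF].
  left; exists k; rewrite Fk /vnorm big1 ?sqrtr0 // => i _.
  by rewrite mxE expr0n.
right.
have H' : forall k, [/\ 0 < gamma k.+1 <= 1,
         2^-1 * vnorm (F k.+1) ^+ 2 <= (2^-1 - c * gamma k.+1) * vnorm (F k) ^+ 2
       & Num.min 1 (2 * (1 - c) * tau * vnorm (F k) ^+ 2
                      / (zeta * vnorm (p k) ^+ 2)) <= gamma k.+1].
  have hF : forall j, F j != 0.
    by move=> j; apply/eqP => e; apply: nF; exists j.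
  move=> k; have [_ h1 _ h2 h3] := H k (fun j _ => hF j).
  by split.
have s0 : forall k, 0 <= vnorm (F k) by move=> k; exact: sqrtr_ge0.
have q0 : forall k, 0 <= vnorm (p k) by move=> k; exact: sqrtr_ge0.
set K := 2 * (1 - c) * tau / zeta.
have K0 : 0 < K by rewrite /K !mulr_gt0 ?invr_gt0 // subr_gt0.
move=> eps e0.
have d0 : 0 < eps ^+ 2 * Num.min 1 K by rewrite mulr_gt0 ?exprn_gt0 // lt_min ltr01.
have dec : forall k, vnorm (F k.+1) ^+ 2 <= vnorm (F k) ^+ 2 - 2 * c * gamma k.+1 * vnorm (F k) ^+ 2.
  move=> k; have [_ h _] := H' k; lra.
have [N HN] := @eventually_small R c _ gamma (fun k => vnorm (F k) ^+ 2) c0 d0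
  (fun k => sqr_ge0 _)
  (fun k => let: And3 h _ _ := H' k in proj1 (andP h)) dec.
exists N => k Nk.
have [_ _ hm] := H' k.
apply: (pointwise K0 e0 (s0 k) (q0 k) _ (HN k Nk)).
move: hm; congr (_ <= _); congr (Num.min _ _).
by rewrite /K invfM; ring.
Qed.
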